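(* Fix real numbers $\lambda>0$, $\beta>0$, $\alpha>1$ and $T_{cl}>0$. Let $(N_k)_{k\ge1}$ be positive integers with $N_k\to\infty$, and let $m_k,c_k$ be positive integers with $m_kc_k=N_k$, $m_k\to\infty$ and $c_k\to\infty$. Define $$a_k=\frac{\lambda\beta\alpha m_k}{\alpha m_k-1},\qquad P_{b,k}=\frac{a_k^{c_k}/c_k!}{\sum_{j=0}^{c_k}a_k^{j}/j!},\qquad \mathbb{E}[T_{\text{sys},k}]=\frac{\beta\alpha m_k}{\alpha m_k-1}(1-P_{b,k})+T_{cl}\,P_{b,k}.$$ Then $\lim_{k\to\infty}\mathbb{E}[T_{\text{sys},k}]=\beta$.
   Context: Model: an edge system with $N$ workers is split into $c$ groups of $m$ workers ($N=mc$); jobs arrive as a Poisson process of rate $\lambda$, each job is replicated on the $m$ workers of a free group, and jobs finding all groups busy are blocked and sent to the cloud, where they take expected time $T_{cl}$. Worker service times are Pareto $\mathrm{Pareto}(\beta,\alpha)$ ($\Pr(X>x)=(\beta/x)^\alpha$ for $x\ge\beta$, $\alpha>1$), so the job-computing time (minimum of $m$ copies) has mean $\frac{\beta m\alpha}{m\alpha-1}$. The blocking probability is the Erlang B formula with $c$ servers and offered load $\lambda\frac{\beta m\alpha}{m\alpha-1}$, and the average system time is $(1-P_b)\mathbb{E}[T_{\text{job}}]+P_b T_{cl}$. *)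

(* Defs.v *)
From Stdlib Require Import Reals Lra.
From Coquelicot Require Import Coquelicot.
Open Scope R_scope.

Definition mean_job (beta alpha : R) (m : nat) : R :=
  beta * alpha * INR m / (alpha * INR m - 1).

Definition load (lambda beta alpha : R) (m : nat) : R :=
  lambda * beta * alpha * INR m / (alpha * INR m - 1).

Definition erlangB (c : nat) (a : R) : R :=
  (a ^ c / INR (Factorial.fact c)) / sum_f_R0 (fun j => a ^ j / INR (Factorial.fact j)) c.

Definition sys_time (lambda beta alpha Tcl : R) (m c : nat) : R :=
  let Pb := erlangB c (load lambda beta alpha m) in
  mean_job beta alpha m * (1 - Pb) + Tcl * Pb.

(* Main.v *)
Require Import Defs.
From Stdlib Require Import Reals Lra Lia.
From Coquelicot Require Import Coquelicot.
Open Scope R_scope.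

Lemma sum_ge0_first (f : nat -> R) n :
  (forall j, 0 <= f j) -> f 0%nat <= sum_f_R0 f n.
Proof.
  intros H; induction n; simpl; [lra|]. specialize (H (S n)); lra.
Qed.

Lemma inr_ge1 n : (0 < n)%nat -> 1 <= INR n.
Proof. intros; apply (le_INR 1); exact H. Qed.

Lemma lim_zero_comp (A : R) (c : nat -> nat) :
  is_lim_seq (fun k => INR (c k)) p_infty ->
  is_lim_seq (fun k => A ^ (c k) / INR (Factorial.fact (c k))) 0.
Proof.
  intros Hc. apply is_lim_seq_spec. intros eps.
  destruct (cv_speed_pow_fact A eps (cond_pos eps)) as [N0 HN].
  apply is_lim_seq_spec in Hc. destruct (Hc (INR N0)) as [N1 HN1].
  exists N1. intros n Hn. specialize (HN1 n Hn).
  assert (N0 <= c n)%nat. { apply INR_lt in HN1. lia. }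
  specialize (HN (c n) H). unfold R_dist in HN. exact HN.
Qed.

Theorem lemma3 (lambda beta alpha Tcl : R) (N m c : nat -> nat) :
  0 < lambda -> 0 < beta -> 1 < alpha -> 0 < Tcl ->
  (forall k, (0 < N k)%nat) -> (forall k, (0 < m k)%nat) -> (forall k, (0 < c k)%nat) ->
  (forall k, (m k * c k = N k)%nat) ->
  is_lim_seq (fun k => INR (N k)) p_infty ->
  is_lim_seq (fun k => INR (m k)) p_infty ->
  is_lim_seq (fun k => INR (c k)) p_infty ->
  is_lim_seq (fun k => sys_time lambda beta alpha Tcl (m k) (c k)) beta.
Proof.
  intros Hl Hb Ha HT HN Hm Hc HNmc LN Lm Lc.
  assert (Hmj : is_lim_seq (fun k => mean_job beta alpha (m k)) beta).
  { assert (Hd : is_lim_seq (fun k => beta / (alpha * INR (m k) - 1)) 0).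
    { apply is_lim_seq_le_le with (u := fun _ => 0)
        (w := fun k => (beta / (alpha - 1)) * / INR (m k)).
      - intros k. pose proof (inr_ge1 _ (Hm k)) as H1. split.
        + apply Rlt_le, Rdiv_lt_0_compat; nra.
        + unfold Rdiv. rewrite Rmult_assoc. apply Rmult_le_compat_l; [lra|].
          rewrite <- Rinv_mult. apply Rinv_le_contravar; nra.
      - apply is_lim_seq_const.
      - replace (Finite 0) with (Rbar_mult (beta / (alpha - 1)) (Rbar_inv p_infty)).
        + apply is_lim_seq_scal_l. apply is_lim_seq_inv; [exact Lm|discriminate].
        + simpl. f_equal. ring. }
    apply is_lim_seq_ext with (u := fun k => beta + beta / (alpha * INR (m k) - 1)).
    - intros k. pose proof (inr_ge1 _ (Hm k)). unfold mean_job. field. nra.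
    - replace (Finite beta) with (Finite (beta + 0)) by (f_equal; ring).
      apply is_lim_seq_plus'; [apply is_lim_seq_const|exact Hd]. }
  set (A := lambda * beta * alpha / (alpha - 1)).
  assert (Hpb : is_lim_seq (fun k => erlangB (c k) (load lambda beta alpha (m k))) 0).
  { apply is_lim_seq_le_le with (u := fun _ => 0)
      (w := fun k => A ^ (c k) / INR (Factorial.fact (c k))).
    - intros k. pose proof (inr_ge1 _ (Hm k)) as H1.
      set (a := load lambda beta alpha (m k)).
      assert (Ha0 : 0 < a).
      { unfold a, load. apply Rdiv_lt_0_compat; [|nra].
        repeat apply Rmult_lt_0_compat; lra. }
      assert (HaA : a <= A).
      { unfold a, load, A.
        assert (E : lambda * beta * alpha * INR (m k) / (alpha * INR (m k) - 1)
          - lambda * beta * alpha / (alpha - 1)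
          = (lambda * beta * alpha * (1 - INR (m k))) / ((alpha * INR (m k) - 1) * (alpha - 1))).
        { field; split; nra. }
        assert (0 < lambda * beta * alpha) by (repeat apply Rmult_lt_0_compat; lra).
        assert (lambda * beta * alpha * (1 - INR (m k)) / ((alpha * INR (m k) - 1) * (alpha - 1)) <= 0).
        { unfold Rdiv. assert (0 < / ((alpha * INR (m k) - 1) * (alpha - 1))) by (apply Rinv_0_lt_compat, Rmult_lt_0_compat; nra). assert (lambda * beta * alpha * (1 - INR (m k)) <= 0) by nra. nra. }
        lra. }
      assert (Hf : forall j, 0 < INR (Factorial.fact j)).
      { intros j. apply lt_0_INR, Factorial.lt_O_fact. }
      assert (Hs : 1 <= sum_f_R0 (fun j => a ^ j / INR (Factorial.fact j)) (c k)).
      { pose proof (sum_ge0_first (fun j => a ^ j / INR (Factorial.fact j)) (c k)) as Hg.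
        simpl in Hg. replace 1 with (1 / 1) by field.
        apply Hg. intros j. apply Rlt_le, Rdiv_lt_0_compat; [apply pow_lt; lra|apply Hf]. }
      assert (Hp : 0 < a ^ c k / INR (Factorial.fact (c k))).
      { apply Rdiv_lt_0_compat; [apply pow_lt; lra|apply Hf]. }
      unfold erlangB. fold a. split.
      + apply Rlt_le, Rdiv_lt_0_compat; lra.
      + apply Rle_trans with (a ^ c k / INR (Factorial.fact (c k))).
        * unfold Rdiv at 1. rewrite <- (Rmult_1_r (a ^ c k / INR (Factorial.fact (c k)))) at 2.
          apply Rmult_le_compat_l; [lra|]. rewrite <- Rinv_1. apply Rinv_le_contravar; lra.
        * unfold Rdiv. apply Rmult_le_compat_r; [apply Rlt_le, Rinv_0_lt_compat, Hf|].
          apply pow_incr; lra.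
    - apply is_lim_seq_const.
    - apply lim_zero_comp; exact Lc. }
  unfold sys_time.
  replace (Finite beta) with (Finite (beta * (1 - 0) + Tcl * 0)) by (f_equal; ring).
  apply is_lim_seq_plus'.
  - apply is_lim_seq_mult'; [exact Hmj|].
    apply is_lim_seq_minus'; [apply is_lim_seq_const|exact Hpb].
  - apply is_lim_seq_mult'; [apply is_lim_seq_const|exact Hpb].
Qed.
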